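(* Let $H$ be a digraph with at least two vertices and $r\in V(H)$ such that every vertex of $H$ is reachable from $r$, and let $(\hat T,\{B_x\}_{x\in V(\hat T)})$ be the $r$-rooted cut decomposition of $H$. Let $R$ be the set of arcs $uv\in A(H)$ such that $v\in V(\hat T)$ and $u\in B_x$ for some node $x$ of the subtree $\hat T_v$ (i.e. $v$ is an ancestor of $x$ or $v=x$). Then every out-tree $T$ in $H$ rooted at $r$ satisfies $A(T)\cap R=\emptyset$.
   Context: Digraphs are finite and without loops; paths are directed. An out-tree is an oriented tree with exactly one vertex of in-degree zero (its root). A vertex $v$ is bi-reachable from $r$ if there are two internally vertex-disjoint directed paths from $r$ to $v$. For a digraph $H$ with at least two vertices and $r\in V(H)$ such that every vertex of $H$ is reachable from $r$, the diblock $B_r$ of $r$ in $H$ is the set of all vertices bi-reachable from $r$, together with $r$ and all out-neighbours of $r$. For $x\in B_r\setminus\{r\}$ let $X_x$ be the set of vertices $v\in V(H)\setminus B_r$ such that every directed $r$–$v$ path intersects $B_r$ for the last time in $x$; $x$ is a bottleneck of $B_r$ if $X_x\ne\emptyset$ (the sets $X_x$ partition $V(H)\setminus B_r$). The $r$-rooted cut decomposition $(\hat T,\{B_x\}_{x\in V(\hat T)})$ of $H$ is defined recursively: $\hat T$ is a rooted tree with root $r$ and $V(\hat T)\subseteq V(H)$; the set associated with the root is $B_r$; the children of $r$ are the bottlenecks of $B_r$; and for each bottleneck $x$, the subtree of $\hat T$ rooted at $x$ together with its associated sets is the $x$-rooted cut decomposition of the induced subgraph $H[X_x\cup\{x\}]$.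 For a node $x$, $\hat T_x$ is the subtree of $\hat T$ rooted at $x$. *)

(* Defs.v *)
From mathcomp Require Import all_boot.
Set Implicit Arguments. Unset Strict Implicit. Unset Printing Implicit Defensive.

(* A digraph is a finite type V of vertices with an arc relation E : rel V
   (loops excluded by a hypothesis in the theorem).  Vertex subsets used for
   induced subgraphs are represented as predicates S : V -> Prop. *)

Section Digraph.
Variables (V : finType) (E : rel V).

(* u :: p is a directed path from u to v in the induced subgraph H[S]:
   consecutive vertices joined by arcs, all vertices in S, no repetition. *)
Definition dpath (S : V -> Prop) (u v : V) (p : seq V) : Prop :=
  [/\ path E u p, (forall y, y \in u :: p -> S y), last u p = v & uniq (u :: p)].

(* internal vertices of the path u :: p (all but the two ends) *)
Definition interior (u : V) (p : seq V) : seq V := behead (belast u p).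

Definition bireach (S : V -> Prop) (r v : V) : Prop :=
  exists p1 p2, [/\ dpath S r v p1, dpath S r v p2, p1 <> p2 &
     forall y, y \in interior r p1 -> y \notin interior r p2].

Definition diblock (S : V -> Prop) (r v : V) : Prop :=
  S v /\ (v = r \/ E r v \/ bireach S r v).

Definition last_in (B : V -> Prop) (r : V) (p : seq V) (x : V) : Prop :=
  exists p1 p2, [/\ r :: p = p1 ++ x :: p2, B x & forall y, y \in p2 -> ~ B y].

Definition Xset (S : V -> Prop) (r x v : V) : Prop :=
  [/\ S v, ~ diblock S r v &
      forall p, dpath S r v p -> last_in (diblock S r) r p x].

Definition bottleneck (S : V -> Prop) (r x : V) : Prop :=
  [/\ diblock S r x, x <> r & exists v, Xset S r x v].

(* InDec S r S' x : the subtree of the r-rooted cut decomposition of H[S]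
   rooted at the node x is the x-rooted cut decomposition of H[S'].
   In particular x is a node of the decomposition and its associated set is
   B_x = diblock S' x. *)
Inductive InDec : (V -> Prop) -> V -> (V -> Prop) -> V -> Prop :=
  | InDec_root S r : InDec S r S r
  | InDec_child S r y S' x :
      bottleneck S r y ->
      InDec (fun v => Xset S r y v \/ v = y) y S' x ->
      InDec S r S' x.

Definition Rarc (r u v : V) : Prop :=
  E u v /\ exists Sv Sx x,
    [/\ InDec (fun _ => True) r Sv v, InDec Sv v Sx x & diblock Sx x u].

Definition und_adj (AT : {set V * V}) : rel V :=
  fun a b => ((a, b) \in AT) || ((b, a) \in AT).

Definition out_tree (r : V) (VT : {set V}) (AT : {set V * V}) : Prop :=
  [/\ forall a, a \in AT -> [&& E a.1 a.2, a.1 \in VT & a.2 \in VT],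
      forall a b, (a, b) \in AT -> (b, a) \notin AT,
      forall a b, a \in VT -> b \in VT -> connect (und_adj AT) a b,
      forall c : seq V, uniq c -> 2 < size c -> ~~ cycle (und_adj AT) c &
      r \in VT /\
      (forall v, v \in VT -> ((forall u, (u, v) \notin AT) <-> v = r))].

End Digraph.

(* Main.v *)
Require Import Defs.
From mathcomp Require Import all_boot.
From Stdlib Require Import Classical Lia.
From mathcomp Require Import zify.
Set Implicit Arguments. Unset Strict Implicit.

Lemma last_decomp (V : eqType) (B : V -> Prop) (s : seq V) x :
  x \in s -> B x ->
  exists p1 y p2, s = p1 ++ y :: p2 /\ B y /\ (forall q, q \in p2 -> ~ B q).
Proof.
elim: s x => [//|a s IH] x /=. rewrite inE => Hx HB.
case: (classic (exists q, q \in s /\ B q)) => [[q [Hq Bq]]|Hn].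
- have [p1 [y [p2 [-> [By Hp2]]]]] := IH q Hq Bq. by exists (a::p1), y, p2.
- have Ba : B a.
  { case/orP: Hx => [/eqP <- //|Hx]. exfalso; apply: Hn; by exists x. }
  exists [::], a, s; split=> //; split=> // q Hq Bq; apply: Hn; by exists q.
Qed.

Lemma seg (V : eqType) (e : rel V) r P p1 y p2 :
  r :: P = p1 ++ y :: p2 -> path e r P -> path e y p2 /\ last r P = last y p2.
Proof.
case: p1 => [|a p1] /= [-> ->]; first by [].
rewrite cat_path last_cat /= => /andP [_ /andP [_ ->]]. by [].
Qed.

Lemma in_interior (V : finType) (r : V) p q :
  q \in r :: p -> q <> r -> q <> last r p -> q \in interior r p.
Proof.
case/lastP: p => [|p l]; first by rewrite inE => /eqP.
rewrite /interior belast_rcons last_rcons /= inE mem_rcons inE.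
case/orP => [/eqP //|]. case/orP => [/eqP //|//].
Qed.

Lemma prefix_avoid (V : finType) (E : rel V) S r x y :
  diblock E S r x -> y <> r -> y <> x ->
  exists A, [/\ path E r A, last r A = x, forall q, q \in A -> S q & y \notin A].
Proof.
case=> Sx [->|[Er|[P1 [P2 [[D1P D1S D1L D1U] [D2P D2S D2L D2U] _ Hdis]]]]] Hyr Hyx.
- by exists [::].
- exists [:: x]; split => //=; first by rewrite Er.
  + by move=> q; rewrite inE => /eqP ->.
  + by rewrite inE; apply/eqP.
- case: (boolP (y \in r :: P1)) => H1.
  + exists P2; split => //; first by move=> q Hq; apply D2S; rewrite inE Hq orbT.
    apply/negP => H2.
    have I1 : y \in interior r P1 by apply: in_interior; rewrite ?D1L.
    have I2 : y \in interior r P2 by apply: in_interior; rewrite ?D2L // inE H2 orbT.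
    by move: (Hdis y I1); rewrite I2.
  + exists P1; split => //; first by move=> q Hq; apply D1S; rewrite inE Hq orbT.
    by apply: contra H1 => H; rewrite inE H orbT.
Qed.

Lemma Xtail (V : finType) (E : rel V) S r y w P p1 p2 z :
  y <> r -> Xset E S r y w -> dpath E S r w P -> r :: P = p1 ++ y :: p2 ->
  (forall q, q \in p2 -> ~ diblock E S r q) -> z \in p2 -> Xset E S r y z.
Proof.
move=> Hyr [Sw nBw Hw] [PP PS PL PU] Heq Hp2 Hz.
have [_ [_ [_ By _]]] := Hw P (And4 PP PS PL PU).
have Sz : S z by apply PS; rewrite Heq mem_cat inE Hz !orbT.
split => // [|Q [QP QS QL QU]]; first by apply Hp2.
have Br : diblock E S r r by split; [apply QS; rewrite inE eqxx | left].
have [q1 [x' [q2 [HQ [Bx' Hq2]]]]] :=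
  last_decomp (B:=diblock E S r) (mem_head r Q) Br.
case: (eqVneq x' y) => [Exy|Nxy].
  by exists q1, q2; rewrite -Exy.
exfalso.
have Nyx : y <> x' by move=> Eyx; rewrite Eyx eqxx in Nxy.
have [A [AP AL AS Ay]] := prefix_avoid Bx' Hyr Nyx.
have [q2P q2L] := seg HQ QP.
have q2S : forall q, q \in q2 -> S q.
  by move=> q Hq; apply QS; rewrite HQ mem_cat inE Hq !orbT.
have q2y : y \notin q2 by apply/negP => /Hq2.
have [p2P p2L] := seg Heq PP.
have [t1 [z' [t2 [Ht [Ez _]]]]] := last_decomp (B:=fun q => q = z) Hz erefl.
subst z'.
have Hyt : y :: p2 = (y :: t1) ++ z :: t2 by rewrite Ht.
have [t2P t2L] := seg Hyt p2P.
have t2S : forall q, q \in t2 -> S q.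
  by move=> q Hq; apply PS; rewrite Heq mem_cat inE Ht mem_cat inE Hq !orbT.
have t2y : y \notin t2.
  move: PU; rewrite Heq cat_uniq => /and3P [_ _] /=.
  by rewrite Ht mem_cat inE negb_or => /andP [/andP [_ /norP [_ ]]].
set W := A ++ q2 ++ t2.
have WP : path E r W.
  by rewrite /W !cat_path AP AL q2P -q2L QL t2P.
have WL : last r W = w by rewrite /W !last_cat AL -q2L QL -t2L -p2L PL.
move: WL; case: (shortenP WP) => p' p'P p'U p'sub WL.
have Dp : dpath E S r w p'.
  split => // q; rewrite inE => /orP [/eqP ->|/p'sub]; first by apply QS; rewrite inE eqxx.
  by rewrite /W !mem_cat => /or3P [/AS|/q2S|/t2S].
have [pp1 [pp2 [Hpp _ _]]] := Hw p' Dp.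
have : y \in r :: p' by rewrite Hpp mem_cat inE eqxx orbT.
rewrite inE => /orP [/eqP //|/p'sub].
by rewrite /W !mem_cat (negbTE Ay) (negbTE q2y) (negbTE t2y).
Qed.

Lemma Inv (V : finType) (E : rel V) S r S' x :
  InDec E S r S' x -> S r ->
  [/\ (forall q, S' q -> S q), S' x & forall w p, S' w -> dpath E S r w p -> x \in r :: p].
Proof.
elim => {S r S' x} [S r | S r y S' x [By Nyr _] _ IH] Sr.
- split=> // w p _ _; exact: mem_head.
- have [IHs IHx IHp] := IH (or_intror erefl).
  split => //.
  + move=> q /IHs [[Sq _ _]|->] //; by case: By.
  + move=> w p Hw Dp. have := IHs w Hw. case => [Xw|Ewy].
    * have [Sw nBw Hall] := Xw.
      have [p1 [p2 [Heq By' Hp2]]] := Hall p Dp.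
      have [DP DS DL DU] := Dp.
      have [p2P p2L] := seg Heq DP.
      have D2 : dpath E (fun v => Xset E S r y v \/ v = y) y w p2.
        split => //; last first.
        - by move: DU; rewrite Heq cat_uniq => /and3P [].
        - by rewrite -p2L.
        move=> q; rewrite inE => /orP [/eqP ->|Hq]; first by right.
        left; exact: (Xtail Nyr Xw Dp Heq Hp2 Hq).
      have := IHp w p2 Hw D2.
      by rewrite Heq mem_cat => ->; rewrite orbT.
    * subst w.
      have D0 : dpath E (fun v => Xset E S r y v \/ v = y) y y [::].
        by split => // q; rewrite inE => /eqP ->; right.
      have := IHp y [::] Hw D0; rewrite inE => /eqP ->.
      have [_ _ DL _] := Dp. by rewrite -DL mem_last.
Qed.

Lemma cyc_false (V : finType) (E : rel V) r VT (AT : {set V * V}) d s2 :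
  irreflexive E -> out_tree E r VT AT ->
  path (fun a b => (b, a) \in AT) d s2 -> uniq (d :: s2) ->
  (d, last d s2) \in AT -> False.
Proof.
move=> irr [HA Hanti _ Hcyc _].
case: s2 => [|c1 [|c2 s]] /=.
- move=> _ _ /HA /andP [Edd _]; by rewrite /= irr in Edd.
- move=> /andP [H1 _] _ H2. by move: (Hanti _ _ H2); rewrite H1.
- move=> P U Hc. move/negP: (Hcyc [:: d, c1, c2 & s] U isT); apply.
  rewrite /cycle rcons_path; apply/andP; split.
  + have P' : path (fun a b => (b, a) \in AT) d [:: c1, c2 & s] by [].
    apply: (sub_path _ P') => a b H; by rewrite /und_adj H orbT.
  + by rewrite /und_adj Hc orbT.
Qed.

Lemma chain_false (V : finType) (E : rel V) r VT (AT : {set V * V}) u v :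
  irreflexive E -> out_tree E r VT AT -> (u, v) \in AT -> v <> r ->
  (forall p, dpath E (fun _ => True) r u p -> v \in r :: p) -> False.
Proof.
move=> irr Hout Huv Hvr Dom.
have [HA Hanti _ _ [Hr Hin]] := Hout.
pose R := fun a b => (b, a) \in AT.
have Euv : E u v by have /and3P [] := HA _ Huv.
have uVT : u \in VT by have /and3P [] := HA _ Huv.
suff: forall n t, #|V| - size t < n -> path R u t -> uniq [:: v, u & t] -> False.
  move/(_ #|V|.+1 [::]); apply => //; first by rewrite subn0.
  by rewrite /= inE andbT; apply/negP => /eqP Evu; rewrite Evu irr in Euv.
elim => [//|n IH] t Hn Pt Ut.
have cVT : last u t \in VT.
  case/lastP: t Pt {Hn Ut} => [//|t' l].
  by rewrite rcons_path last_rcons => /andP [_ /HA /and3P []].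
set c := last u t in cVT *.
case: (eqVneq c r) => [Ecr|Ncr].
- set p := rev (belast u t).
  have Hrp : r :: p = rev (u :: t) by rewrite [u :: t]lastI rev_rcons -/c Ecr.
  have Dp : dpath E (fun _ => True) r u p.
    split => //.
    + have := rev_path (fun a b => (a, b) \in AT) u t.
      rewrite -/c Ecr -/p => Hp.
      have Hp' : path (fun a b => (a, b) \in AT) r p by rewrite Hp; exact: Pt.
      apply: (sub_path _ Hp') => a b /HA /and3P [] //.
    + have : last r (r :: p) = u by rewrite Hrp rev_cons last_rcons.
      by [].
    + rewrite Hrp rev_uniq. by case/andP: Ut.
  have := Dom p Dp; rewrite Hrp mem_rev => Hv.
  by case/andP: Ut => /negP.
- have [d Hd] : exists d, (d, c) \in AT.
    apply: NNPP => Hn'. move/eqP: Ncr; apply. apply (proj1 (Hin c cVT)) => u0; apply/negP => Hu0.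
    apply: Hn'. by exists u0.
  case: (boolP (d \in [:: v, u & t])) => Hdin.
  + have [s1 [d' [s2 [Hs [Ed _]]]]] := last_decomp (B:=fun q => q = d) Hdin erefl.
    subst d'.
    have Pvt : path R v (u :: t) by rewrite /= Pt andbT.
    have [P2 L2] := seg Hs Pvt.
    apply: (cyc_false irr Hout P2).
    * by move: Ut; rewrite Hs cat_uniq => /and3P [].
    * by rewrite -L2.
  + apply: (IH (rcons t d)).
    * have : size [:: v, u & t] <= #|V|.
        by rewrite -(card_uniqP Ut) max_card.
      rewrite size_rcons /=. move: Hn. move: #|V| (size t) => N k. lia.
    * by rewrite rcons_path Pt.
    * by rewrite -!rcons_cons rcons_uniq Hdin.
Qed.

Theorem corollary1 (V : finType) (E : rel V) (r : V) :
  irreflexive E ->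
  1 < #|V| ->
  (forall v, connect E r v) ->
  forall (VT : {set V}) (AT : {set V * V}),
    out_tree E r VT AT ->
    forall a, a \in AT -> ~ Rarc E r a.1 a.2.
Proof.
move=> irr _ _ VT AT Hout [u v] Ha [Euv [Sv [Sx [x [I1 I2 Dx]]]]] /=.
have [_ Svv Dom] := Inv I1 I.
have [Sxsub _ _] := Inv I2 Svv.
have Svu : Sv u := Sxsub u (proj1 Dx).
case: (eqVneq v r) => [Evr|Nvr].
- have [_ _ _ _ [Hr Hin]] := Hout.
  by move: Ha; rewrite Evr; move/negP: ((proj2 (Hin r Hr)) erefl u).
- apply: (chain_false irr Hout Ha (elimN eqP Nvr)) => p Dp.
  exact: Dom u p Svu Dp.
Qed.
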